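(* Let $T$ be a caterpillar tree such that every cutpoint of $T$ has degree at least three. Then $\dim R/I(L(T))=s$, where $s$ is the number of cutpoints of $T$, equivalently the number of maximal cliques of $L(T)$.
   Context: A caterpillar tree is a tree in which removing all vertices of degree $1$ leaves a chordless path. A cutpoint is a vertex whose removal disconnects the graph. The line graph $L(T)$ has vertex set $E(T)$, two vertices adjacent iff the corresponding edges share a vertex. $R=\Bbbk[e_{uv}:\{u,v\}\in E(T)]$ for a field $\Bbbk$, $I(L(T))=\langle e_fe_g: f\neq g\in E(T),\ f\cap g\neq\emptyset\rangle$, and $\dim$ is Krull dimension. *)

(* Defs.v *)
From HB Require Import structures.
From mathcomp Require Import all_boot all_order all_algebra.
From mathcomp Require Import mpoly.
Set Implicit Arguments. Unset Strict Implicit. Unset Printing Implicit Defensive.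
Import GRing.Theory.
Local Open Scope ring_scope.

Definition simple_graph (V : finType) (e : rel V) : Prop :=
  ssrbool.symmetric e /\ ssrbool.irreflexive e.

Definition acyclic (V : finType) (e : rel V) : Prop :=
  forall c : seq V, uniq c -> (2 < size c)%N -> ~~ cycle e c.

Definition is_tree (V : finType) (e : rel V) : Prop :=
  simple_graph e /\ (forall x y, connect e x y) /\ acyclic e.

Definition degree (V : finType) (e : rel V) (x : V) : nat := #|[set y | e x y]|.

Definition rel_avoid (V : finType) (e : rel V) (A : {set V}) : rel V :=
  fun a b => [&& e a b, a \notin A & b \notin A].

Definition cutpoint (V : finType) (e : rel V) (x : V) : bool :=
  [exists y, exists z, [&& y != x, z != x & ~~ connect (rel_avoid e [set x]) y z]].

Definition cutpoints (V : finType) (e : rel V) : {set V} := [set x | cutpoint e x].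

Definition induced_chordless_path (V : finType) (e : rel V) (S : {set V}) : Prop :=
  exists (v : V) (p : seq V),
    [/\ uniq (v :: p), (forall x, (x \in v :: p) = (x \in S)) &
    forall i j, (i < size (v :: p))%N -> (j < size (v :: p))%N ->
      e (nth v (v :: p) i) (nth v (v :: p) j) = ((i.+1 == j) || (j.+1 == i))].

Definition caterpillar (V : finType) (e : rel V) : Prop :=
  is_tree e /\ induced_chordless_path e [set x | degree e x != 1%N].

Definition edges (V : finType) (e : rel V) : {set {set V}} :=
  [set u : {set V} | [exists x, exists y, e x y && (u == [set x; y])]].

(* variable e_f for the edge f = enum_val i, i : 'I_#|edges e| *)
Definition edge_of (V : finType) (e : rel V) (i : 'I_#|edges e|) : {set V} :=
  enum_val i.

Definition is_ideal (A : comNzRingType) (P : A -> Prop) : Prop :=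
  [/\ P 0, (forall p q, P p -> P q -> P (p + q)) & (forall a p, P p -> P (a * p))].

Definition is_prime_ideal (A : comNzRingType) (P : A -> Prop) : Prop :=
  [/\ is_ideal P, ~ P 1 & (forall p q, P (p * q) -> P p \/ P q)].

Definition ideal_gen (A : comNzRingType) (G : A -> Prop) : A -> Prop :=
  fun p => forall J : A -> Prop, is_ideal J -> (forall g, G g -> J g) -> J p.

Definition line_graph_gens (F : fieldType) (V : finType) (e : rel V)
  : {mpoly F[#|edges e|]} -> Prop :=
  fun p => exists i j : 'I_#|edges e|,
    [/\ i != j, edge_of i :&: edge_of j != set0 & p = 'X_i * 'X_j].

Definition edge_ideal_line_graph (F : fieldType) (V : finType) (e : rel V)
  : {mpoly F[#|edges e|]} -> Prop := ideal_gen (@line_graph_gens F V e).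

(* a chain P_0 < P_1 < ... < P_n of prime ideals of A containing I, of length n;
   these correspond exactly to chains of primes of A/I *)
Definition prime_chain_over (A : comNzRingType) (I : A -> Prop)
    (n : nat) (P : nat -> A -> Prop) : Prop :=
  [/\ (forall k, (k <= n)%N -> is_prime_ideal (P k)),
      (forall k, (k <= n)%N -> forall a, I a -> P k a),
      (forall k, (k < n)%N -> forall a, P k a -> P k.+1 a) &
      (forall k, (k < n)%N -> exists2 a, P k.+1 a & ~ P k a)].

Definition quot_krull_dim_eq (A : comNzRingType) (I : A -> Prop) (d : nat) : Prop :=
  (exists P, prime_chain_over I d P) /\
  (forall n P, prime_chain_over I n P -> (n <= d)%N).

Arguments edge_ideal_line_graph F [V] e.

(* Main.v *)
Require Import Defs.
From HB Require Import structures.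
From mathcomp Require Import all_boot all_order all_algebra.
From mathcomp Require Import mpoly.
From mathcomp Require Import zify.
From Stdlib Require Import ClassicalEpsilon.
Set Implicit Arguments. Unset Strict Implicit. Unset Printing Implicit Defensive.
Import GRing.Theory.
Local Open Scope ring_scope.

Section Ideals.
Variable R : comNzRingType.
Implicit Types (P : R -> Prop).

Lemma idealN P x : is_ideal P -> P x -> P (- x).
Proof. by case=> _ _ hM hx; rewrite -mulN1r; apply: hM. Qed.

Lemma idealB P x y : is_ideal P -> P x -> P y -> P (x - y).
Proof. by move=> hI hx hy; case: (hI) => _ hD _; apply: hD => //; apply: idealN. Qed.

Lemma idealMr P x y : is_ideal P -> P x -> P (x * y).
Proof. by case=> _ _ hM hx; rewrite mulrC; apply: hM. Qed.

Lemma ideal_sum P (I : Type) (r : seq I) (Q : pred I) (f : I -> R) :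
  is_ideal P -> (forall i, Q i -> P (f i)) -> P (\sum_(i <- r | Q i) f i).
Proof.
case=> h0 hD _ hf; elim/big_ind: _ => //.
Qed.

Lemma prime_pow P x n : is_prime_ideal P -> P (x ^+ n) -> P x.
Proof.
case=> hI h1 hM; elim: n => [|n IH]; first by rewrite expr0.
by rewrite exprS => /hM [].
Qed.

End Ideals.

Definition mono (R : comNzRingType) B (xs : seq R) (mu : seq 'I_B) : R :=
  \prod_(p <- zip xs mu) p.1 ^+ p.2.

Lemma mono_cons (R : comNzRingType) B x xs (a : 'I_B) mu :
  mono (x :: xs) (a :: mu) = x ^+ a * mono xs mu :> R.
Proof. by rewrite /mono /= big_cons. Qed.

Lemma mono_nil (R : comNzRingType) B (mu : seq 'I_B) : mono [::] mu = 1 :> R.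
Proof. by rewrite /mono; case: mu => [|a mu] /=; apply: big_nil. Qed.

Lemma mono_nil2 (R : comNzRingType) B (xs : seq R) : mono xs ([::] : seq 'I_B) = 1.
Proof. by case: xs => [|x xs]; rewrite /mono /=; apply: big_nil. Qed.

Lemma sum_tuple_cons (V : nmodType) k B (f : k.+1.-tuple 'I_B -> V) :
  \sum_mu f mu = \sum_(a : 'I_B) \sum_(nu : k.-tuple 'I_B) f [tuple of a :: nu].
Proof.
rewrite pair_bigA /=.
rewrite (reindex (fun p : 'I_B * k.-tuple 'I_B => [tuple of p.1 :: p.2])) //=.
exists (fun mu : k.+1.-tuple 'I_B => (thead mu, [tuple of behead mu])).
  move=> [a nu] _ /=; rewrite theadE; congr pair; exact: val_inj.
move=> mu _ /=; exact/esym/tuple_eta.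
Qed.

Lemma sum_tuple0 (V : nmodType) B (f : 0.-tuple 'I_B -> V) :
  \sum_mu f mu = f [tuple].
Proof.
rewrite (eq_bigr (fun _ => f [tuple])); last by move=> mu _; rewrite (tuple0 mu).
by rewrite sumr_const card_tuple expn0.
Qed.

Lemma chain_sum (R : comNzRingType) B k : forall (P : nat -> R -> Prop)
  (xs : seq R) (c : k.-tuple 'I_B -> R),
  size xs = k ->
  (forall j, (j <= k)%N -> is_prime_ideal (P j)) ->
  (forall j, (j < k)%N -> forall a, P j a -> P j.+1 a) ->
  (forall j, (j < k)%N -> P j.+1 (nth 0 xs j) /\ ~ P j (nth 0 xs j)) ->
  (forall mu, c mu != 0 -> ~ P k (c mu)) ->
  (exists mu, c mu != 0) ->
  ~ P 0%N (\sum_mu c mu * mono xs mu).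
Proof.
elim: k => [|k IH] P xs c hs hP hinc hx hc [mu0 hmu0].
  rewrite sum_tuple0; case: xs hs hx => // _ _.
  rewrite /mono big_nil mulr1; rewrite (tuple0 mu0) in hmu0.
  exact: hc.
case: xs hs hx => [|x0 xs] //= [hs] hx.
set g := fun a : 'I_B => \sum_(nu : k.-tuple 'I_B) c [tuple of a :: nu] * mono xs nu.
have -> : \sum_mu c mu * mono (x0 :: xs) mu = \sum_(a : 'I_B) x0 ^+ a * g a.
  rewrite sum_tuple_cons; apply: eq_bigr => a _; rewrite /g mulr_sumr.
  apply: eq_bigr => nu _; rewrite /mono /= big_cons /=.
  by rewrite mulrCA.
pose Q := fun a : 'I_B => [exists nu : k.-tuple 'I_B, c [tuple of a :: nu] != 0].
have hQ0 : Q (thead mu0).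
  apply/existsP; exists [tuple of behead mu0]; by rewrite -tuple_eta.
case: (arg_minnP (fun a : 'I_B => nat_of_ord a) hQ0) => a0 hQa0 hmin.
have glt : forall a : 'I_B, (a < a0)%N -> g a = 0.
  move=> a ha; rewrite /g big1 // => nu _.
  have : ~~ Q a by apply/negP => /hmin; rewrite leqNgt ha.
  by move/existsPn/(_ nu); rewrite negbK => /eqP ->; rewrite mul0r.
have hg0 : ~ P 1%N (g a0).
  apply: (IH (fun j => P j.+1) xs (fun nu => c [tuple of a0 :: nu])) => //.
  - by move=> j hj; apply: hP.
  - by move=> j hj; apply: hinc.
  - by move=> j hj; apply: (hx j.+1).
  - by move=> mu hmu; apply: hc.
  - by case/existsP: hQa0 => nu hnu; exists nu.
set h := \sum_(a : 'I_B | (a0 < a)%N) x0 ^+ (a - a0.+1) * g a.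
have -> : \sum_(a : 'I_B) x0 ^+ a * g a = x0 ^+ a0 * (g a0 + x0 * h).
  rewrite (bigD1 a0) //= (bigID (fun a : 'I_B => (a0 < a)%N)) /=.
  rewrite [X in _ + (_ + X)]big1; last first.
    move=> a /andP [hne hlt]; rewrite glt ?mulr0 //.
    rewrite ltn_neqAle leqNgt hlt andbT; apply: contra hne => /eqP hh.
    by apply/eqP/val_inj.
  rewrite addr0 mulrDr; congr (_ + _).
  rewrite /h !mulr_sumr; apply: eq_big => [a|a /andP [hne hlt]].
    case: (a =P a0) => [->|hne]; first by rewrite ltnn andbF.
    done.
  rewrite [x0 * (_ * _)]mulrA -exprS mulrA -exprD; congr (x0 ^+ _ * _); lia.
case: (hP 0%N isT) => hI01 h1 hM.
move=> /hM [].
  by move/(prime_pow (hP 0%N isT)); case: (hx 0%N isT).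
move=> /(hinc 0%N isT) hin; apply: hg0.
have -> : g a0 = (g a0 + x0 * h) - x0 * h by rewrite addrK.
apply: idealB => //; first by case: (hP 1%N isT).
apply: idealMr; first by case: (hP 1%N isT).
by case: (hx 0%N isT).
Qed.

Section AlgDep.
Variable F : fieldType.

Lemma msize_exp k (p : {mpoly F[k]}) a : (msize (p ^+ a) <= 1 + a * (msize p).+1)%N.
Proof.
elim: a => [|a IH]; first by rewrite expr0 msize1.
rewrite exprS; apply: leq_trans (msizeM_le _ _) _; lia.
Qed.

Lemma arith1 (A n n0 : nat) : (A <= n)%N -> (1 + A + (1 + n0 * (2 + n)) < 1 + n0.+1 * (2 + n))%N.
Proof. nia. Qed.

Lemma msize_mono k B d (xs : seq {mpoly F[k]}) (mu : seq 'I_B) :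
  all (fun x => msize x <= d)%N xs ->
  (msize (mono xs mu) <= 1 + size xs * (2 + B * d.+1))%N.
Proof.
elim: xs mu => [|x xs IH] [|a mu] /=; rewrite ?mono_nil ?mono_nil2 ?msize1 //.
case/andP=> hx hxs; rewrite mono_cons.
apply: leq_trans (msizeM_le _ _) _.
have h1 := msize_exp x a; have h2 := IH mu hxs.
have h3 : (a * (msize x).+1 <= B * d.+1)%N.
  by apply: leq_mul; [apply: ltnW | rewrite ltnS].
apply: leq_ltn_trans (leq_add h1 h2) _.
exact: arith1 h3.
Qed.

Lemma all_msize_sumn k (xs : seq {mpoly F[k]}) :
  all (fun x => msize x <= sumn (map (fun y => msize y) xs))%N xs.
Proof.
elim: xs => //= x xs IH; rewrite leq_addr /=.
by apply: sub_all IH => y hy; apply: leq_trans hy (leq_addl _ _).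
Qed.

Lemma expn_mono e m n : (m <= n)%N -> (m ^ e <= n ^ e)%N.
Proof. by move=> h; elim: e => // e IH; rewrite !expnS leq_mul. Qed.

Lemma mnm_le_mdeg k (m : 'X_{1..k}) i : (m i <= mdeg m)%N.
Proof. by rewrite mdegE (bigD1 i) //= leq_addr. Qed.

Lemma exists_nonzero_row m n (A : 'M[F]_(m, n)) : A != 0 -> exists i, row i A != 0.
Proof.
move=> hA; case: (pickP (fun i => row i A != 0)) => [i hi|h]; first by exists i.
case/negP: hA; apply/eqP/row_matrixP => i; rewrite row0; apply/eqP.
by move: (h i) => /= /negbFE.
Qed.

Lemma alg_dep k (xs : seq {mpoly F[k]}) : size xs = k.+1 ->
  exists B, exists c : k.+1.-tuple 'I_B -> F,
    (exists mu, c mu != 0) /\ \sum_mu (c mu)%:MP * mono xs mu = 0.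
Proof.
move=> hs.
set d := sumn (map (fun y => msize y) xs).
set c0 := (k.+1 * (d + 3)).+1.
set B := (c0 ^ k).+1.
set K := (k.+1 * (2 + B * d.+1)).+1.
have hK : forall mu : k.+1.-tuple 'I_B, (msize (mono xs mu) <= K)%N.
  move=> mu; apply: leq_trans (msize_mono _ (all_msize_sumn xs)) _.
  by rewrite hs.
pose I := k.+1.-tuple 'I_B.
pose J := 'X_{1..k < K}.
pose A : 'M[F]_(#|{: I}|, #|{: J}|) :=
  \matrix_(i, j) (mono xs (enum_val i : I))@_(bmnm (enum_val j : J)).
have cardI : #|{: I}| = (B ^ k.+1)%N by rewrite card_tuple card_ord.
have cardJ : (#|{: J}| <= K ^ k)%N.
  have -> : (K ^ k)%N = #|{: {ffun 'I_k -> 'I_K}}| by rewrite card_ffun !card_ord.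
  pose f := fun j : J => [ffun i : 'I_k => (inord (bmnm j i) : 'I_K)].
  apply: (@leq_card _ _ f) => j1 j2 /ffunP h; apply: val_inj; apply/mnmP => i.
  have := h i; rewrite !ffunE => /(congr1 val); rewrite /= !inordK //.
  - exact: leq_ltn_trans (mnm_le_mdeg _ _) (bmdeg j2).
  - exact: leq_ltn_trans (mnm_le_mdeg _ _) (bmdeg j1).
have hBK : (K ^ k < B ^ k.+1)%N.
  have hK1 : (K <= c0 * B)%N by rewrite /K /c0; lia.
  apply: leq_ltn_trans (expn_mono k hK1) _.
  rewrite expnMn expnS ltn_pmul2r ?expn_gt0 //.
have hker : kermx A != 0.
  rewrite -mxrank_eq0 mxrank_ker; have := rank_leq_col A; lia.
case: (exists_nonzero_row hker) => r hr.
set v := row r (kermx A).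
have hvA : v *m A = 0 by rewrite /v -row_mul mulmx_ker row0.
exists B, (fun mu => v 0 (enum_rank mu)); split.
  have hv : v != 0 := hr.
  case: (pickP (fun i => v 0 i != 0)) => [i hi|hn].
    by exists (enum_val i); rewrite enum_valK.
  case/negP: hv; apply/eqP/matrixP => a b; rewrite (ord1 a) mxE.
  by move: (hn b) => /= /negbFE /eqP; rewrite !mxE.
apply/mpolyP => nu; rewrite mcoeff0 raddf_sum /=.
under eq_bigr do rewrite mcoeffCM.
case: (ltnP (mdeg nu) K) => hnu; last first.
  rewrite big1 // => mu _; apply/eqP; rewrite mulf_eq0 mcoeff_eq0; apply/orP; right.
  by apply: msize_mdeg_ge; apply: leq_trans (hK mu) hnu.
pose j0 : J := BMultinom hnu.
have E : (v *m A) 0 (enum_rank j0) = 0 by rewrite hvA mxE.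
apply: etrans E; rewrite mxE.
rewrite (reindex (@enum_val I predT)) /=; last first.
  by exists enum_rank => x _; [rewrite enum_valK | rewrite enum_rankK].
have HA : forall i j, A i j = (mono xs (enum_val i : I))@_(bmnm (enum_val j : J)).
  by move=> ? ?; rewrite mxE.
apply: eq_bigr => i _; rewrite enum_valK mxE HA enum_rankK.
by [].
Qed.

End AlgDep.

Lemma const_not_in_prime (F : fieldType) m (P : {mpoly F[m]} -> Prop) (c : F) :
  is_prime_ideal P -> c != 0 -> ~ P c%:MP.
Proof.
case=> hI h1 _ hc hP; apply: h1.
have -> : (1 : {mpoly F[m]}) = (c^-1)%:MP * c%:MP.
  by rewrite -mpolyCM mulVf // mpolyC1.
by case: hI => _ _ hM; apply: hM.
Qed.

Lemma core_chain (F : fieldType) m n (Q : nat -> {mpoly F[m]} -> Prop) :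
  (forall j, (j <= n)%N -> is_prime_ideal (Q j)) ->
  (forall j, (j < n)%N -> forall a, Q j a -> Q j.+1 a) ->
  (forall j, (j < n)%N -> exists2 a, Q j.+1 a & ~ Q j a) ->
  (n <= m)%N.
Proof.
move=> hP hinc hstr; rewrite leqNgt; apply/negP => hmn.
pose f := fun j => epsilon (inhabits (0 : {mpoly F[m]})) (fun a => Q j.+1 a /\ ~ Q j a).
have hf : forall j, (j < n)%N -> Q j.+1 (f j) /\ ~ Q j (f j).
  move=> j hj; rewrite /f; apply: (epsilon_spec (inhabits (0 : {mpoly F[m]})) (fun a => Q j.+1 a /\ ~ Q j a)); case: (hstr j hj) => a h1 h2; by exists a.
pose xs := mkseq f m.+1.
have [B [c [[mu0 hmu0] hsum]]] := alg_dep (size_mkseq f m.+1).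
apply: (@chain_sum _ B m.+1 Q xs (fun mu => (c mu)%:MP)).
- exact: size_mkseq.
- by move=> j hj; apply: hP; apply: leq_trans hj hmn.
- by move=> j hj; apply: hinc; apply: leq_trans hj hmn.
- by move=> j hj; rewrite nth_mkseq //; apply: hf; apply: leq_trans hj hmn.
- move=> mu; rewrite mpolyC_eq0 => hc; apply: const_not_in_prime hc.
  exact: hP.
- by exists mu0; rewrite mpolyC_eq0.
- rewrite hsum; by case: (hP 0%N isT) => [[]].
Qed.

Lemma comp_comp (F : fieldType) n k l (p : {mpoly F[n]}) (lq : n.-tuple {mpoly F[k]})
  (lr : k.-tuple {mpoly F[l]}) :
  (p \mPo lq) \mPo lr = p \mPo [tuple (tnth lq i \mPo lr) | i < n].
Proof.
rewrite [p \mPo lq]comp_mpolyEX [RHS]comp_mpolyEX raddf_sum /=.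
apply: eq_bigr => m _; rewrite comp_mpolyZ !comp_mpolyX rmorph_prod /=.
congr (_ *: _); apply: eq_bigr => i _; by rewrite rmorphXn tnth_mktuple.
Qed.

Lemma prime_ideal_of (A : comNzRingType) (P : A -> Prop) : is_prime_ideal P -> is_ideal P.
Proof. by case. Qed.

Lemma monomial_in_ideal (F : fieldType) N (P : {mpoly F[N]} -> Prop) (mu : 'X_{1..N}) i :
  is_ideal P -> P 'X_i -> mu i != 0%N -> P 'X_[mu].
Proof.
move=> hI hX hmu; rewrite mpolyXE_id (bigD1 i) //=.
apply: idealMr => //; case: (mu i) hmu => // k _; rewrite exprS.
by case: hI => _ _ hM; rewrite mulrC; apply: hM.
Qed.

Lemma reduce_chain (F : fieldType) N n (P : nat -> {mpoly F[N]} -> Prop) (U : {set 'I_N}) :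
  (forall j, (j <= n)%N -> is_prime_ideal (P j)) ->
  (forall j, (j < n)%N -> forall a, P j a -> P j.+1 a) ->
  (forall j, (j < n)%N -> exists2 a, P j.+1 a & ~ P j a) ->
  (forall i, i \notin U -> P 0%N 'X_i) ->
  (n <= #|U|)%N.
Proof.
move=> hP hinc hstr hU.
pose tpsi : N.-tuple {mpoly F[#|U|]} :=
  [tuple (if (insub (index i (enum U)) : option 'I_#|U|) is Some j then 'X_j else 0) | i < N].
pose tsig : #|U|.-tuple {mpoly F[N]} := [tuple 'X_(enum_val j) | j < #|U|].
pose sig := fun p : {mpoly F[#|U|]} => p \mPo tsig.
pose psi := fun p : {mpoly F[N]} => p \mPo tpsi.
have hpi : forall i, tnth tpsi i \mPo tsig = if i \in U then 'X_i else 0.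
  move=> i; rewrite tnth_mktuple; case: insubP => [j hj hval|hj] /=.
    rewrite comp_mpolyXU -tnth_nth tnth_mktuple.
    have hiU : i \in enum U by rewrite -index_mem -cardE.
    rewrite -mem_enum hiU; congr 'X_(_).
    by rewrite /enum_val hval nth_index.
  rewrite comp_mpoly0.
  by rewrite -mem_enum -index_mem -cardE (negbTE hj).
have hP0 : forall j, (j <= n)%N -> forall a, P 0%N a -> P j a.
  elim=> [//|j IH] hj a ha; apply: hinc => //; apply: IH => //; exact: ltnW.
have hI0 := prime_ideal_of (hP 0%N isT).
have key : forall p, P 0%N (p - sig (psi p)).
  move=> p; rewrite /sig /psi comp_comp.
  rewrite {1}[p]mpolyE comp_mpolyEX -sumrB.
  apply: ideal_sum => // mu _; rewrite -scalerBr -mul_mpolyC.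
  case: (hI0) => _ _ hM; apply: hM.
  rewrite comp_mpolyX.
  under eq_bigr do rewrite tnth_mktuple hpi.
  case: (boolP [forall i, (i \notin U) ==> (mu i == 0%N)]) => h.
    rewrite [X in _ - X](_ : _ = 'X_[mu]) ?subrr //; first by case: hI0.
    rewrite mpolyXE_id; apply: eq_bigr => i _.
    case: ifP => // hi; move/forallP/(_ i): h; rewrite hi /= => /eqP ->.
    by rewrite !expr0.
  move/forallPn: h => [i]; rewrite negb_imply => /andP [hi hmu].
  rewrite (bigD1 i) //= (negbTE hi) expr0n (negbTE hmu) mul0r subr0.
  exact: monomial_in_ideal (hU _ hi) hmu.
apply: (@core_chain F #|U| n (fun j a => P j (sig a))).
- move=> j hj; case: (hP j hj) => [[h0 hD hM] h1 hpr]; split; first split.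
  + by rewrite /sig comp_mpoly0.
  + by move=> p q hp hq; rewrite /sig comp_mpolyD; apply: hD.
  + by move=> a p hp; rewrite /sig rmorphM; apply: hM.
  + by rewrite /sig comp_mpoly1.
  + by move=> p q; rewrite /sig rmorphM; apply: hpr.
- by move=> j hj a; apply: hinc.
- move=> j hj; case: (hstr j hj) => a ha hna; exists (psi a).
    have -> : sig (psi a) = a - (a - sig (psi a)) by rewrite opprB addrC subrK.
    apply: idealB; first exact: prime_ideal_of (hP j.+1 hj).
      by [].
    by apply: hP0 => //; apply: key.
  move=> hs; apply: hna.
  have -> : a = sig (psi a) + (a - sig (psi a)) by rewrite addrC subrK.
  case: (hP j (ltnW hj)) => [[_ hD _] _ _]; apply: hD => //.
  by apply: hP0; [apply: ltnW | apply: key].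
Qed.

Section Lower.
Variables (F : fieldType) (N : nat).

Definition kill (S : {set 'I_N}) : N.-tuple {mpoly F[N]} :=
  [tuple (if i \in S then 0 else 'X_i) | i < N].

Lemma kill_comp (S S' : {set 'I_N}) p : S \subset S' ->
  (p \mPo kill S) \mPo kill S' = p \mPo kill S'.
Proof.
move=> hS; rewrite comp_comp; congr (_ \mPo _); apply: eq_from_tnth => i.
rewrite !tnth_mktuple; case: ifP => hi.
  by rewrite comp_mpoly0 (subsetP hS _ hi).
by rewrite comp_mpolyXU -tnth_nth tnth_mktuple.
Qed.

Lemma kill_X (S : {set 'I_N}) i : 'X_i \mPo kill S = if i \in S then 0 else 'X_i.
Proof. by rewrite comp_mpolyXU -tnth_nth tnth_mktuple. Qed.

Lemma mpolyX_neq0 i : ('X_i : {mpoly F[N]}) != 0.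
Proof. by rewrite -msize_poly_eq0 msizeX. Qed.

Lemma kill_prime (S : {set 'I_N}) : is_prime_ideal (fun p => p \mPo kill S = 0).
Proof.
split; first split.
- exact: comp_mpoly0.
- by move=> p q hp hq; rewrite comp_mpolyD hp hq addr0.
- by move=> a p hp; rewrite rmorphM /= hp mulr0.
- by rewrite comp_mpoly1; apply/eqP; exact: oner_neq0.
- by move=> p q; rewrite rmorphM /= => /eqP; rewrite mulf_eq0 => /orP [] /eqP; [left|right].
Qed.

Lemma lower_chain (G : {mpoly F[N]} -> Prop) (M : {set 'I_N}) s :
  (s <= #|M|)%N ->
  (forall g, G g -> exists i j, g = 'X_i * 'X_j /\ ((i \notin M) || (j \notin M))) ->
  exists P, prime_chain_over (ideal_gen G) s P.
Proof.
move=> hs hG.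
pose ms := enum M.
pose S := fun k => [set i | (i \notin M) || (i \in take k ms)].
exists (fun k p => p \mPo kill (S k) = 0); split.
- by move=> k _; apply: kill_prime.
- move=> k _ a ha; apply: (ha (fun p => p \mPo kill (S k) = 0)); first by case: (kill_prime (S k)).
  move=> g /hG [i [j [-> hij]]]; rewrite rmorphM /= !kill_X !inE.
  case/orP: hij => -> /=; by rewrite ?mul0r ?mulr0.
- move=> k _ a ha; rewrite -(kill_comp a (_ : S k \subset S k.+1)) ?ha ?comp_mpoly0 //.
  apply/subsetP => i; rewrite !inE => /orP [->//|hi]; apply/orP; right.
  have hiM : i \in ms by apply: mem_take hi.
  rewrite in_take //; rewrite in_take // in hi; exact: leqW hi.
- move=> k hk.
  have hkm : (k < size ms)%N by rewrite -cardE; apply: leq_trans hk hs.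
  have hkN : (k < N)%N by apply: leq_trans hk (leq_trans hs _); rewrite -[X in (_ <= X)%N]card_ord; apply: max_card.
  pose i0 := Ordinal hkN.
  set x := nth i0 ms k.
  have hxm : x \in ms by apply: mem_nth; rewrite -cardE; apply: leq_trans hk hs.
  have hxM : x \in M by rewrite -mem_enum.
  have hix : index x ms = k by apply: index_uniq; [rewrite -cardE; apply: leq_trans hk hs | apply: enum_uniq].
  exists 'X_x; rewrite kill_X !inE hxM /= in_take // hix ?ltnSn ?ltnn //.
  exact/eqP/mpolyX_neq0.
Qed.

End Lower.

Local Close Scope ring_scope.

Section Graph.
Variables (V : finType) (e : rel V).
Hypothesis hsym : ssrbool.symmetric e.
Hypothesis hirr : irreflexive e.
Hypothesis hacy : acyclic e.

Lemma path_avoid x y p : path (rel_avoid e [set x]) y p -> all (fun z => z != x) p.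
Proof.
elim: p y => //= z p IH y /andP [h hp]; rewrite (IH z) // andbT.
by case/and3P: h => _ _; rewrite inE.
Qed.

Lemma two_nbrs_cut x y z : e x y -> e x z -> y != z -> cutpoint e x.
Proof.
move=> hxy hxz hyz.
have hyx : y != x by apply: contraTneq hxy => ->; rewrite hirr.
have hzx : z != x by apply: contraTneq hxz => ->; rewrite hirr.
apply/existsP; exists y; apply/existsP; exists z; rewrite hyx hzx /=.
apply/negP => /connectP [p hp hlast].
move: hlast; case: (shortenP hp) => p' hp' hu _ hlast.
have hav := path_avoid hp'.
have hp'e : path e y p' by apply: sub_path hp' => a b /and3P [].
have hne : p' != [::] by apply: contra hyz => /eqP hp0; rewrite hlast hp0.
have hcyc : cycle e (x :: y :: p') by rewrite /= hxy rcons_path hp'e /= -hlast hsym.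
have huq : uniq (x :: y :: p').
  rewrite /= in hu *; rewrite hu andbT inE negb_or eq_sym hyx /=; apply/negP => hx.
  by move/allP/(_ x hx): hav; rewrite eqxx.
have hsz : (2 < size (x :: y :: p'))%N by case: p' hne {hp hp' hu hav hp'e hlast hcyc huq}.
by move: (hacy huq hsz); rewrite hcyc.
Qed.

Definition nbrs x := [set y | e x y].

Lemma degree1_uniq w c c' : degree e w = 1%N -> e w c -> e w c' -> c = c'.
Proof.
move=> /eqP/cards1P [a ha] hc hc'.
have : c \in nbrs w by rewrite inE.
have : c' \in nbrs w by rewrite inE.
by rewrite /nbrs ha !inE => /eqP -> /eqP ->.
Qed.

End Graph.

Section Cater.
Variables (V : finType) (e : rel V).
Hypothesis hcat : caterpillar e.

Lemma cat_sym : ssrbool.symmetric e. Proof. by case: hcat => [[[]]]. Qed.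
Lemma cat_irr : irreflexive e. Proof. by case: hcat => [[[]]]. Qed.
Lemma cat_acy : acyclic e. Proof. by case: hcat => [[_ []]]. Qed.

Lemma degree_eq1 x y : e x y -> (forall z, e x z -> z = y) -> degree e x = 1%N.
Proof.
move=> hxy hz; rewrite /degree (_ : [set z | e x z] = [set y]) ?cards1 //.
by apply/setP => z; rewrite !inE; apply/idP/eqP => [/hz|->].
Qed.

Lemma edge_has_cut x y : e x y -> cutpoint e x || cutpoint e y.
Proof.
move=> hxy.
case: hcat => [[_ [hconn _]] [v [p [hu hmem hadj]]]].
have hsym := cat_sym; have hirr := cat_irr; have hacy := cat_acy.
case: (pickP (fun z => e x z && (z != y))) => [z /andP [hxz hzy] | hx].
  by apply/orP; left; apply: (two_nbrs_cut hsym hirr hacy hxy hxz); rewrite eq_sym.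
case: (pickP (fun z => e y z && (z != x))) => [z /andP [hyz hzx] | hy].
  have hyx : e y x by rewrite hsym.
  by apply/orP; right; apply: (two_nbrs_cut hsym hirr hacy hyx hyz); rewrite eq_sym.
exfalso.
have hx' : forall z, e x z -> z = y.
  by move=> z hz; move: (hx z) => /=; rewrite hz /= => /negbFE /eqP.
have hy' : forall z, e y z -> z = x.
  by move=> z hz; move: (hy z) => /=; rewrite hz /= => /negbFE /eqP.
pose A := [set x; y].
have hcl1 : forall a b, e a b -> a \in A -> b \in A.
  move=> a b hab; rewrite !inE => /orP [] /eqP ha; subst a.
    by rewrite (hx' _ hab) eqxx orbT.
  by rewrite (hy' _ hab) eqxx.
have hcl : closed e (mem A).
  move=> a b hab; apply/idP/idP; first exact: hcl1.
  by apply: hcl1; rewrite hsym.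
have hv : v \in A by rewrite -(closed_connect hcl (hconn x v)) !inE eqxx.
have hvS : v \in [set z | degree e z != 1%N] by rewrite -hmem mem_head.
rewrite inE in hvS; move: hvS.
have hdx := degree_eq1 hxy hx'.
have hdy : degree e y = 1%N by apply: (degree_eq1 _ hy'); rewrite hsym.
by move: hv; rewrite !inE => /orP [] /eqP ->; rewrite ?hdx ?hdy.
Qed.

Lemma cut_has_leaf c : (3 <= degree e c)%N -> exists w, e c w && (degree e w == 1%N).
Proof.
move=> hdeg.
case: (pickP (fun w => e c w && (degree e w == 1%N))) => [w h|hn]; first by exists w.
exfalso.
case: hcat => [_ [v [p [hu hmem hadj]]]].
have hcS : c \in v :: p by rewrite hmem inE; apply: contraTneq hdeg => ->.
set s := v :: p in hcS hmem hadj hu.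
set i := index c s.
have hi : (i < size s)%N by rewrite index_mem.
have hsub : [set z | e c z] \subset [set nth v s i.+1; nth v s i.-1].
  apply/subsetP => w; rewrite inE => hw.
  have hwS : w \in s by rewrite hmem inE; move: (hn w) => /=; rewrite hw /= => ->.
  set j := index w s.
  have hj : (j < size s)%N by rewrite index_mem.
  have := hadj i j hi hj; rewrite !nth_index // hw => /esym /orP [] /eqP hij.
    by rewrite !inE hij /j nth_index // eqxx.
  by rewrite !inE -hij /= nth_index // eqxx orbT.
have := subset_leq_card hsub; rewrite cards2; move: hdeg; rewrite /degree.
by case: (_ != _) => /=; lia.
Qed.

End Cater.

Local Open Scope ring_scope.

Definition pb (Q : Prop) : bool := if excluded_middle_informative Q then true else false.

Lemma pbP (Q : Prop) : reflect Q (pb Q).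
Proof. by rewrite /pb; case: excluded_middle_informative => h; constructor. Qed.

Local Close Scope ring_scope.

Theorem proposition3p6 (F : fieldType) (V : finType) (e : rel V) :
  caterpillar e ->
  (forall x, x \in cutpoints e -> 3 <= degree e x) ->
  quot_krull_dim_eq (edge_ideal_line_graph F e) #|cutpoints e|.
Proof.
move=> hcat hdeg.
have hsym := cat_sym hcat; have hirr := cat_irr hcat.
have [v0 _] : exists v0 : V, true by case: hcat => [_ [v _]]; exists v.
have edge_fact : forall i : 'I_#|edges e|, exists x y, e x y /\ edge_of i = [set x; y].
  move=> i; have := enum_valP i; rewrite inE => /existsP [x /existsP [y /andP [hxy /eqP hu]]].
  by exists x, y.
pose l := fun c => odflt c [pick w | e c w && (degree e w == 1%N)].
have hl : forall c, c \in cutpoints e -> e c (l c) /\ degree e (l c) = 1%N.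
  move=> c hc; rewrite /l; case: pickP => [w /andP [h1 /eqP h2] //|hn].
  case: (cut_has_leaf hcat (hdeg c hc)) => w hw; by move: (hn w); rewrite hw.
have hgen : forall p, line_graph_gens p -> edge_ideal_line_graph F e p.
  by move=> p hp J _ hJ; apply: hJ.
split.
-
  pose M := [set i : 'I_#|edges e| | [exists c in cutpoints e, edge_of i == [set c; l c]]].
  apply: (@lower_chain F _ _ M).
  + pose g := fun i : 'I_#|edges e| =>
      odflt v0 [pick c in cutpoints e | edge_of i == [set c; l c]].
    apply: leq_trans (leq_imset_card g M); apply: subset_leq_card; apply/subsetP => c hc.
    have hu : [set c; l c] \in edges e.
      rewrite inE; apply/existsP; exists c; apply/existsP; exists (l c).
      by rewrite (proj1 (hl c hc)) eqxx.
    pose i := enum_rank_in hu [set c; l c].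
    have hei : edge_of i = [set c; l c] by rewrite /edge_of /i enum_rankK_in.
    have hiM : i \in M by rewrite inE; apply/existsP; exists c; rewrite hc hei eqxx.
    apply/imsetP; exists i => //.
    rewrite /g; case: pickP => [c' /andP [hc' /eqP he]|hn]; last first.
      by move: (hn c); rewrite hc hei eqxx.
    have : c' \in [set c; l c] by rewrite -hei he !inE eqxx.
    rewrite !inE => /orP [/eqP -> //| /eqP hcl]; exfalso.
    by move: (hdeg c' hc'); rewrite hcl (proj2 (hl c hc)).
  + move=> p [i [j [hij hne ->]]]; exists i, j; split => //.
    rewrite -negb_and; apply/negP => /andP []; rewrite !inE.
    move=> /exists_inP [c hc /eqP hi] /exists_inP [c' hc' /eqP hj].
    case/set0Pn: hne => z; rewrite inE hi hj !inE => /andP [hz1 hz2].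
    have hcc : c != c'.
      apply: contra hij => /eqP hcc; subst c'; apply/eqP; apply: enum_val_inj.
      by rewrite /edge_of in hi hj; rewrite hi hj.
    have [hlc1 hlc2] := hl c hc; have [hlc1' hlc2'] := hl c' hc'.
    case/orP: hz1 => /eqP hz1; case/orP: hz2 => /eqP hz2; subst z.
    * by rewrite hz2 eqxx in hcc.
    * by move: (hdeg c hc); rewrite hz2 hlc2'.
    * by move: (hdeg c' hc'); rewrite -hz2 hlc2.
    * case/negP: hcc; apply/eqP; apply: (degree1_uniq hlc2); first by rewrite hsym.
      by rewrite hz2 hsym.
-
  move=> n P [hP hI hinc hstr].
  pose U := [set i : 'I_#|edges e| | pb (~ P 0%N 'X_i)].
  have hU : forall i, i \notin U -> P 0%N 'X_i.
    move=> i; rewrite inE => /pbP h; case: (excluded_middle_informative (P 0%N 'X_i)) => // h'.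
  apply: leq_trans (reduce_chain hP hinc hstr hU) _.
  have hdisj : forall i j, i \in U -> j \in U -> i != j -> edge_of i :&: edge_of j = set0.
    move=> i j; rewrite !inE => /pbP hi /pbP hj hij; apply/eqP/negPn/negP => hne.
    have := hI 0%N isT _ (hgen _ (ex_intro _ i (ex_intro _ j (And3 hij hne erefl)))).
    by case: (hP 0%N isT) => _ _ hpr /hpr [].
  pose f := fun i : 'I_#|edges e| => odflt v0 [pick c in cutpoints e | c \in edge_of i].
  have hf : forall i, f i \in cutpoints e /\ f i \in edge_of i.
    move=> i; rewrite /f; case: pickP => [c /andP [h1 h2] //|hn].
    case: (edge_fact i) => x [y [hxy hu]].
    case/orP: (edge_has_cut hcat hxy) => hc.
      by move: (hn x); rewrite inE hc hu !inE eqxx.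
    by move: (hn y); rewrite inE hc hu !inE eqxx orbT.
  rewrite -(card_in_imset (f := f)).
    apply: subset_leq_card; apply/subsetP => c /imsetP [i _ ->]; by case: (hf i).
  move=> i j hi hj hfij; apply/eqP/negPn/negP => hij.
  have := hdisj i j hi hj hij; apply/eqP/set0Pn; exists (f i).
  by rewrite inE (proj2 (hf i)) hfij (proj2 (hf j)).
Qed.
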